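(* Let $M\ge1$ be an integer, let $\lambda,\omega,T>0$, $\alpha,\beta\ge0$, and let $f_0\ge f^*$ be reals. For $\rho\in[0,1)$ satisfying $\lambda<\frac{1-\sqrt\rho}{6\sqrt M\,\omega}$ define $$G(\rho)=\frac{M\lambda^2\omega^2}{(1-\sqrt\rho)^2-18M\lambda^2\omega^2},\qquad B(\rho)=\frac{1}{\tfrac12-9G(\rho)}\left(\frac{f_0-f^*}{\lambda T}+\frac{\lambda\omega\alpha^2}{2M}+\alpha^2G(\rho)+9\beta^2G(\rho)\right).$$ Then $B$ is a monotonically increasing function of $\rho$ on this domain.
   Context: $B(\rho)$ is the right-hand side of the paper's ergodic convergence bound for decentralized federated learning, with $\rho=\rho(\overline{\mathbf W^2})=\max\{\lambda_2(\overline{\mathbf W^2}),-\lambda_M(\overline{\mathbf W^2})\}$, the second-largest-in-magnitude eigenvalue of the expected squared mixing matrix; $M$ is the number of devices, $\lambda$ the learning rate, $\omega$ the gradient Lipschitz constant, $\alpha^2,\beta^2$ variance bounds, $T$ the number of rounds, $f_0$ the initial and $f^*$ the optimal loss value. *)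

(* Defs.v *)
From Stdlib Require Import Reals.
Open Scope R_scope.

Definition Gfun (M : nat) (lam om rho : R) : R :=
  INR M * lam ^ 2 * om ^ 2 / ((1 - sqrt rho) ^ 2 - 18 * INR M * lam ^ 2 * om ^ 2).

Definition Bfun (M : nat) (lam om T alpha beta f0 fstar rho : R) : R :=
  / (1 / 2 - 9 * Gfun M lam om rho) *
  ((f0 - fstar) / (lam * T) + lam * om * alpha ^ 2 / (2 * INR M)
   + alpha ^ 2 * Gfun M lam om rho + 9 * beta ^ 2 * Gfun M lam om rho).

Definition admissible (M : nat) (lam om rho : R) : Prop :=
  0 <= rho < 1 /\ lam < (1 - sqrt rho) / (6 * sqrt (INR M) * om).

(* Main.v *)
Require Import Defs.
From Stdlib Require Import Reals Lra Psatz.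
Open Scope R_scope.

Lemma Bform (K C a2 b2 u : R) : 0 < K -> 36 * K < u ->
  / (1 / 2 - 9 * (K / (u - 18 * K))) *
  (C + a2 * (K / (u - 18 * K)) + 9 * b2 * (K / (u - 18 * K)))
  = 2 * C + (36 * C * K + 2 * (a2 + 9 * b2) * K) * / (u - 36 * K).
Proof.
  intros HK Hu.
  assert (u - 18 * K <> 0) by lra.
  assert (u - 36 * K <> 0) by lra.
  assert (E : 1 / 2 - 9 * (K / (u - 18 * K)) = (u - 36 * K) / (2 * (u - 18 * K))).
  { field; auto. }
  rewrite E. field. split; auto.
Qed.

Lemma adm_bound (M : nat) (lam om rho : R) : (1 <= M)%nat -> 0 < lam -> 0 < om ->
  admissible M lam om rho ->
  36 * (INR M * lam ^ 2 * om ^ 2) < (1 - sqrt rho) ^ 2 /\ sqrt rho < 1.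
Proof.
  intros HM Hl Ho [[H0 H1] H2].
  assert (HMp : 0 < INR M) by (apply lt_0_INR; lia).
  assert (Hs : 0 < sqrt (INR M)) by (apply sqrt_lt_R0; lra).
  assert (Hsq : sqrt (INR M) * sqrt (INR M) = INR M) by (apply sqrt_sqrt; lra).
  assert (Hr : sqrt rho < 1).
  { rewrite <- sqrt_1. apply sqrt_lt_1; lra. }
  split; auto.
  assert (Hp : 0 < 6 * sqrt (INR M) * om) by (apply Rmult_lt_0_compat; lra).
  assert (H3 : lam * (6 * sqrt (INR M) * om) < 1 - sqrt rho).
  { apply (Rmult_lt_compat_r (6 * sqrt (INR M) * om)) in H2; auto.
    unfold Rdiv in H2. rewrite (Rmult_assoc (1 - sqrt rho)), Rinv_l in H2; lra. }
  assert (H4 : 0 < lam * (6 * sqrt (INR M) * om)) by (apply Rmult_lt_0_compat; lra).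
  assert (H5 : (lam * (6 * sqrt (INR M) * om)) ^ 2 < (1 - sqrt rho) ^ 2) by nra.
  replace ((lam * (6 * sqrt (INR M) * om)) ^ 2) with
    (36 * (sqrt (INR M) * sqrt (INR M)) * lam ^ 2 * om ^ 2) in H5 by ring.
  rewrite Hsq in H5. lra.
Qed.

Theorem proposition1 (M : nat) (lam om T alpha beta f0 fstar : R) :
  (1 <= M)%nat -> 0 < lam -> 0 < om -> 0 < T -> 0 <= alpha -> 0 <= beta ->
  fstar <= f0 ->
  forall rho1 rho2 : R,
    admissible M lam om rho1 -> admissible M lam om rho2 -> rho1 <= rho2 ->
    Bfun M lam om T alpha beta f0 fstar rho1 <= Bfun M lam om T alpha beta f0 fstar rho2.
Proof.
  intros HM Hl Ho HT Ha Hb Hf rho1 rho2 A1 A2 H12.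
  destruct (adm_bound M lam om rho1 HM Hl Ho A1) as [B1 S1].
  destruct (adm_bound M lam om rho2 HM Hl Ho A2) as [B2 S2].
  assert (HMp : 0 < INR M) by (apply lt_0_INR; lia).
  set (K := INR M * lam ^ 2 * om ^ 2) in *.
  assert (HK : 0 < K) by (unfold K; apply Rmult_lt_0_compat; [apply Rmult_lt_0_compat|]; nra).
  set (C := (f0 - fstar) / (lam * T) + lam * om * alpha ^ 2 / (2 * INR M)).
  assert (HC : 0 <= C).
  { unfold C. apply Rplus_le_le_0_compat.
    - unfold Rdiv. apply Rmult_le_pos; [lra|]. apply Rlt_le, Rinv_0_lt_compat; nra.
    - unfold Rdiv. apply Rmult_le_pos; [|apply Rlt_le, Rinv_0_lt_compat; lra].
      apply Rmult_le_pos; nra. }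
  unfold Bfun, Gfun.
  replace (18 * INR M * lam ^ 2 * om ^ 2) with (18 * K) by (unfold K; ring).
  fold K. fold C.
  rewrite !Bform by auto.
  apply Rplus_le_compat_l.
  apply Rmult_le_compat_l.
  - nra.
  - apply Rinv_le_contravar; [lra|].
    assert (sqrt rho1 <= sqrt rho2) by (apply sqrt_le_1_alt; auto).
    assert (0 <= sqrt rho1) by apply sqrt_pos.
    nra.
Qed.
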